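(* Let $\mathcal{A}=\{A_1,\dots,A_m\}$ be a bimodal collection of pairwise disjoint nonempty subsets of a finite abelian group $G$, with internal difference groups $H_1,\dots,H_m$, labelled so that $|A_i|<|H_i|$ exactly for $i=1,\dots,r$, where $r\ge2$. Let $D=(a_1+H_1)\setminus A_1$, where $a_1+H_1$ is the coset of $H_1$ containing $A_1$, and suppose $\mathcal{A}$ is in canonical position, i.e. $D$ is a subgroup of $G$. Let $A=A_1\cup\dots\cup A_m$ and $H=H_1+\dots+H_r$. Then: (1) $H_1,\dots,H_r$ form an $r$-star with kernel $D$ (i.e. $H_i\cap H_j=D$ for all distinct $i,j\le r$), and $A_i=H_i\setminus D$ for each $1\le i\le r$; (2) every $A_i$ with $i>r$ is a coset of a subgroup of $D$; (3) $H\setminus D\subseteq A$, and the sets in $\mathcal{A}$ with index greater than $r$ can be relabelled so that for some $k$ with $r\le k\le m$ the set $H\setminus D$ is partitioned by $A_1,\dots,A_k$; (4) if $k<m$, then the sets $A_i$ with $i>k$ arise from a subdivision of cosets of $H$, i.e. their union is a union of cosets of $H$ and each of them is a coset of a subgroup of $G$ contained in a single coset of $H$.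
   Context: $G$ is written additively. The internal difference group $H_i$ of $A_i$ is the subgroup generated by all $x-y$ with $x,y\in A_i$; $A_i$ lies in a single coset of $H_i$ and $|A_i|\le|H_i|$. A collection $\{A_1,\dots,A_m\}$ of pairwise disjoint subsets of $G$ is bimodal if for every $i$ and every $\delta\in G\setminus\{0\}$, the number $N_i(\delta)$ of pairs $(a,b)$ with $a\in A_i$, $b\in A_j$ for some $j\neq i$, and $a-b=\delta$, satisfies $N_i(\delta)\in\{0,|A_i|\}$. (For such collections with $r\ge2$ the set $D$ equals $(a_i+H_i)\setminus A_i$ for every $i\le r$ and is a coset of a subgroup; canonical position means the collection has been translated so that $D$ is a subgroup.) *)

(* Defs.v *)
From mathcomp Require Import all_boot all_order all_algebra all_fingroup.
Set Implicit Arguments. Unset Strict Implicit. Unset Printing Implicit Defensive.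
Import GRing.Theory.
Local Open Scope ring_scope.

(* G : finZmodType is a finite abelian group written additively; it carries
   MathComp's canonical finGroupType structure whose "multiplication" is +
   (zmodMgE), so {group G} are exactly the (additive) subgroups of G. *)

Section Defs.
Variable G : finZmodType.

Definition coset_add (x : G) (S : {set G}) : {set G} := [set x + s | s in S].

Definition diff_group (A : {set G}) : {set G} :=
  <<[set x - y | x in A, y in A]>>%g.

Definition Ncount (m : nat) (A : 'I_m -> {set G}) (i : 'I_m) (d : G) : nat :=
  #|[set p : G * G | [&& p.1 \in A i,
                         [exists j : 'I_m, (j != i) && (p.2 \in A j)] &
                         p.1 - p.2 == d]]|.

Definition bimodal (m : nat) (A : 'I_m -> {set G}) : Prop :=
  (forall i j : 'I_m, i != j -> [disjoint A i & A j]) /\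
  (forall (i : 'I_m) (d : G), d != 0 ->
     Ncount A i d = 0%N \/ Ncount A i d = #|A i|).

(* sum H_1 + ... + H_r of the first r difference groups (0-based indices < r) *)
Definition sum_diff_groups (m r : nat) (A : 'I_m -> {set G}) : {set G} :=
  <<\bigcup_(i : 'I_m | (i < r)%N) diff_group (A i)>>%g.

End Defs.

(* Main.v *)
Require Import Defs.
From mathcomp Require Import all_boot all_order all_algebra all_fingroup.
Import GRing.Theory.
Set Implicit Arguments. Unset Strict Implicit.

Lemma perm_sortex (m r : nat) (p : pred 'I_m) : (r <= m)%N ->
  (forall i : 'I_m, (i < r)%N -> p i) ->
  exists (k : nat) (s : {perm 'I_m}),
    [/\ (r <= k <= m)%N, (forall i : 'I_m, (i < r)%N -> s i = i)
      & forall i : 'I_m, p (s i) = (i < k)%N].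
Proof.
move=> rm pr.
set e := enum 'I_m.
set L1 := filter p e; set L2 := filter (predC p) e.
have pe : perm_eq (L1 ++ L2) (ord_tuple m) by rewrite perm_filterC.
case/tuple_permP: pe => q Lq.
have qE : forall j : 'I_m, q j = nth j (L1 ++ L2) j.
  move=> j; rewrite Lq /= (nth_map j); last by rewrite -cardE card_ord.
  by rewrite nth_ord_enum /= tnth_ord_tuple.
have sizeL : size (L1 ++ L2) = m.
  have pe' : perm_eq (L1 ++ L2) e by rewrite perm_filterC.
  by rewrite (perm_size pe') -cardE card_ord.
have sizee : size e = m by rewrite -cardE card_ord.
have L1E : L1 = take r e ++ filter p (drop r e).
  rewrite /L1 -{1}(cat_take_drop r e) filter_cat; congr (_ ++ _).
  apply/all_filterP/allP => x xt; apply: pr.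
  have szt : size (take r e) = r by rewrite size_takel // sizee.
  have nlt : (index x (take r e) < r)%N by rewrite -{2}szt index_mem.
  have := nth_index x xt; rewrite nth_take // => <-.
  by rewrite /e nth_enum_ord //; exact: leq_trans nlt rm.
have szt : size (take r e) = r by rewrite size_takel // sizee.
have rk : (r <= size L1)%N by rewrite L1E size_cat szt leq_addr.
have km : (size L1 <= m)%N by apply: leq_trans (leq_addr (size L2) _) _; rewrite -size_cat sizeL.
exists (size L1), q; split.
- by rewrite rk km.
- move=> i ir; apply: val_inj; rewrite qE nth_cat (leq_trans ir rk).
  by rewrite L1E nth_cat szt ir nth_take // /e nth_ord_enum.
- move=> i; rewrite qE nth_cat; case: ifP => ik.
    by have := mem_nth i ik; rewrite mem_filter => /andP[].
  have iL2 : (i - size L1 < size L2)%N.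
    by rewrite ltn_subLR; [rewrite -size_cat sizeL | rewrite leqNgt ik].
  by have := mem_nth i iL2; rewrite mem_filter => /andP[/negbTE].
Qed.

Local Open Scope ring_scope.

Lemma grp0 (G : finZmodType) (K : {group G}) : (0 : G) \in K.
Proof. by rewrite -FinRing.zmod1gE group1. Qed.

Lemma grpD (G : finZmodType) (K : {group G}) (x y : G) :
  x \in K -> y \in K -> x + y \in K.
Proof. by move=> hx hy; rewrite -FinRing.zmodMgE groupM. Qed.

Lemma grpN (G : finZmodType) (K : {group G}) (x : G) :
  x \in K -> - x \in K.
Proof. by move=> hx; rewrite -FinRing.zmodVgE groupV. Qed.

Lemma grpNE (G : finZmodType) (K : {group G}) (x : G) :
  (- x \in K) = (x \in K).
Proof. by apply/idP/idP => h; [rewrite -(opprK x)|]; apply: grpN. Qed.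

Lemma grpB (G : finZmodType) (K : {group G}) (x y : G) :
  x \in K -> y \in K -> x - y \in K.
Proof. by move=> hx hy; apply: grpD => //; apply: grpN. Qed.

Lemma gen_closed (G : finZmodType) (S P : {set G}) :
  (0 : G) \in P -> (forall x y, x \in P -> y \in P -> x + y \in P) ->
  S \subset P -> <<S>>%g \subset P.
Proof.
move=> P0 PD SP.
have gP : group_set P.
  apply/group_setP; split; first by rewrite FinRing.zmod1gE.
  by move=> x y hx hy; rewrite FinRing.zmodMgE; apply: PD.
by rewrite -[P]/(gval (Group gP)) gen_subG.
Qed.

Lemma in_coset_add (G : finZmodType) (a x : G) (K : {group G}) :
  (x \in coset_add a K) = (x - a \in K).
Proof.
apply/imsetP/idP => [[s hs ->]|h]; first by rewrite addrC addKr.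
by exists (x - a) => //; rewrite addrC subrK.
Qed.

Lemma card_coset_add (G : finZmodType) (a : G) (S : {set G}) :
  #|coset_add a S| = #|S|.
Proof. by apply: card_imset; apply: addrI. Qed.

Definition dg (G : finZmodType) (S : {set G}) : {group G} :=
  <<[set x - y | x in S, y in S]>>%G.

Lemma dgE (G : finZmodType) (S : {set G}) : diff_group S = dg S.
Proof. by []. Qed.

Lemma dg_mem (G : finZmodType) (S : {set G}) x y :
  x \in S -> y \in S -> x - y \in dg S.
Proof. by move=> hx hy; apply: mem_gen; apply/imset2P; exists x y. Qed.

Lemma disj_mem (T : finType) (A B : {set T}) (x : T) :
  [disjoint A & B] -> x \in A -> x \in B -> False.
Proof. by rewrite disjoints_subset => /subsetP/[apply]; rewrite inE => /negP. Qed.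

Lemma gen_step (G : finZmodType) (m : nat) (A : 'I_m -> {set G})
  (Hbim : bimodal A) (i : 'I_m) (x x' y : G) :
  x \in A i -> x' \in A i -> y \in (\bigcup_(j : 'I_m) A j) :\: A i ->
  y + (x' - x) \in (\bigcup_(j : 'I_m) A j) :\: A i.
Proof.
case: Hbim => Hdis Hcnt hx hx'; rewrite inE => /andP[yni /bigcupP[j _ yj]].
have ji : j != i by apply: contraNneq yni => <-.
set d := x - y.
have d0 : d != 0.
  by rewrite subr_eq0; apply: contraNneq yni => <-.
set S := [set p : G * G | [&& p.1 \in A i,
                         [exists j : 'I_m, (j != i) && (p.2 \in A j)] &
                         p.1 - p.2 == d]].
have xyS : (x, y) \in S.
  by rewrite inE /= hx eqxx andbT; apply/existsP; exists j; rewrite ji yj.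
have cardS : #|S| = #|A i|.
  case: (Hcnt i d d0) => // h0.
  by move: h0; rewrite /Ncount -/S => /eqP; rewrite cards_eq0 => /eqP S0;
     move: xyS; rewrite S0 inE.
have injf : {in S &, injective (fun p : G * G => p.1)}.
  move=> [p1 p2] [q1 q2]; rewrite !inE /= => /and3P[_ _ /eqP e1] /and3P[_ _ /eqP e2] e.
  subst q1; congr (_, _).
  by apply: oppr_inj; apply: (@addrI _ p1); rewrite e1 e2.
have imS : [set p.1 | p in S] = A i.
  apply/eqP; rewrite eqEcard card_in_imset // cardS leqnn andbT.
  by apply/subsetP => z /imsetP[p]; rewrite inE => /and3P[? _ _] ->.
have : x' \in [set p.1 | p in S] by rewrite imS.
move=> /imsetP[[p1 p2]]; rewrite inE /= =>
  /and3P[_ /existsP[k /andP[ki p2k]] /eqP e] ->.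
have -> : y + (p1 - x) = p2.
  by rewrite -[p2](subKr p1) e /d opprB addrC -addrA [- x + _]addrC.
rewrite inE; apply/andP; split; last by apply/bigcupP; exists k.
by apply/negP => p2i; exact: (disj_mem (Hdis _ _ ki) p2k p2i).
Qed.

Lemma periodic (G : finZmodType) (m : nat) (A : 'I_m -> {set G})
  (Hbim : bimodal A) (i : 'I_m) (y h : G) :
  y \in (\bigcup_(j : 'I_m) A j) :\: A i -> h \in dg (A i) ->
  y + h \in (\bigcup_(j : 'I_m) A j) :\: A i.
Proof.
set B := _ :\: _.
pose P := [set h : G | [forall z, (z \in B) ==> (z + h \in B)]].
suff sP : (dg (A i) : {set G}) \subset P.
  by move=> yB /(subsetP sP); rewrite inE => /forallP/(_ y)/implyP; apply.
apply: gen_closed.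
- by rewrite inE; apply/forallP => z; rewrite addr0 implybb.
- move=> u v; rewrite !inE => /forallP Pu /forallP Pv; apply/forallP => z.
  apply/implyP => zB; rewrite addrA.
  by move/implyP: (Pv (z + u)); apply; move/implyP: (Pu z); apply.
- apply/subsetP => u /imset2P[x1 x2 h1 h2 ->]; rewrite inE.
  by apply/forallP => z; apply/implyP => zB; apply: gen_step.
Qed.

Unset Implicit Arguments. Set Strict Implicit.

Theorem theorem3p10 (G : finZmodType) (m r : nat) (A : 'I_m -> {set G})
  (D : {set G})
  (Hbim : bimodal A)
  (Hne : forall i : 'I_m, A i != set0)
  (Hr2 : (2 <= r)%N) (Hrm : (r <= m)%N)
  (Hlab : forall i : 'I_m, (#|A i| < #|diff_group (A i)|)%N = (i < r)%N)
  (HD : forall (i : 'I_m) (a : G), nat_of_ord i = 0%N -> a \in A i ->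
          D = coset_add a (diff_group (A i)) :\: A i)
  (Hcanon : group_set D) :
  let H := sum_diff_groups r A in
  (* (1) *)
  (forall i j : 'I_m, (i < r)%N -> (j < r)%N -> i != j ->
      diff_group (A i) :&: diff_group (A j) = D) /\
  (forall i : 'I_m, (i < r)%N -> A i = diff_group (A i) :\: D) /\
  (* (2) *)
  (forall i : 'I_m, (r <= i)%N ->
      exists (K : {group G}) (x : G), K \subset D /\ A i = coset_add x K) /\
  (* (3) and (4) *)
  H :\: D \subset \bigcup_(i : 'I_m) A i /\
  exists (k : nat) (s : {perm 'I_m}),
    [/\ (r <= k <= m)%N,
        (forall i : 'I_m, (i < r)%N -> s i = i),
        H :\: D = \bigcup_(i : 'I_m | (i < k)%N) A (s i) &
        ((k < m)%N ->
          (forall x h : G, x \in \bigcup_(i : 'I_m | (k <= i)%N) A (s i) ->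
              h \in H -> x + h \in \bigcup_(i : 'I_m | (k <= i)%N) A (s i)) /\
          (forall i : 'I_m, (k <= i)%N ->
              exists (K : {group G}) (x y : G),
                A (s i) = coset_add x K /\ A (s i) \subset coset_add y H))].
Proof.
move=> H.
have Hdis := Hbim.1.
have {}Hlab : forall i : 'I_m, (#|A i| < #|dg (A i)|)%N = (i < r)%N := Hlab.
have {}HD : forall (i : 'I_m) (a : G), nat_of_ord i = 0%N -> a \in A i ->
          D = coset_add a (dg (A i)) :\: A i := HD.
rewrite /diff_group -/(dg _).
set Aall := \bigcup_(j : 'I_m) A j.
have AinAll : forall i x, x \in A i -> x \in Aall.
  by move=> i x xi; apply/bigcupP; exists i.
have per := periodic Hbim.
have F1 : forall i a x, a \in A i -> x \in Aall -> x - a \in dg (A i) -> x \in A i.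
  move=> i a x ai xA xa; apply/negPn/negP => xni.
  have xB : x \in Aall :\: A i by rewrite inE xni.
  have := per i x (a - x) xB; rewrite -grpNE opprB => /(_ xa).
  by rewrite addrC subrK inE ai.
have F2 : forall i a x h, a \in A i -> x \notin Aall -> x - a \notin dg (A i) ->
    h \in dg (A i) -> x + h \notin Aall.
  move=> i a x h ai xE xa hH; apply/negP => xhA.
  case xhi : (x + h \in A i).
    move/negP: xa; apply; have := dg_mem xhi ai.
    by move/grpB/(_ hH); rewrite addrAC addrK.
  have xhB : x + h \in Aall :\: A i by rewrite inE xhi.
  have := per i _ (- h) xhB (grpN hH); rewrite addrK inE => /andP[_].
  by apply/negP.
have shift : forall (K : {group G}) a a' x, a - a' \in K ->
    (x - a \in K) = (x - a' \in K).
  move=> K a a' x aa; apply/idP/idP => h.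
    by have := grpD h aa; rewrite addrA subrK.
  by have := grpB h aa; rewrite opprB addrA subrK.
have Hfull : forall (i : 'I_m) a, (r <= i)%N -> a \in A i ->
    forall h, h \in dg (A i) -> a + h \in A i.
  move=> i a ri ai h hH.
  have sub : A i \subset coset_add a (dg (A i)).
    by apply/subsetP => x xi; rewrite in_coset_add dg_mem.
  have : A i == coset_add a (dg (A i)).
    rewrite eqEcard sub card_coset_add leqNgt Hlab.
    by rewrite -leqNgt.
  by move/eqP ->; rewrite in_coset_add [a + h]addrC addrK.
have Hhole : forall (i : 'I_m) a, (i < r)%N -> a \in A i ->
    exists2 h, h \in dg (A i) & a + h \notin Aall.
  move=> i a ir ai.
  have : ~~ (coset_add a (dg (A i)) \subset A i).
    apply/negP => /subset_leq_card; rewrite card_coset_add leqNgt Hlab ir.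
    by [].
  case/subsetPn => z; rewrite in_coset_add => za zni.
  exists (z - a) => //; rewrite addrC subrK.
  by apply: contra zni => zA; apply: F1 ai zA za.
have m0 : (0 < m)%N by apply: leq_trans Hrm; apply: leq_trans Hr2.
pose i0 := Ordinal m0.
have i0r : (i0 < r)%N by apply: leq_trans Hr2.
have /set0Pn[a0 a0A] := Hne i0.
have HD0 := HD i0 a0 erefl a0A.
have D0 : (0 : G) \in D.
  by move/andP: Hcanon => [+ _]; rewrite FinRing.zmod1gE.
have a0H : a0 \in dg (A i0).
  by move: D0; rewrite HD0 inE in_coset_add sub0r grpNE => /andP[_].
have DE : forall x, (x \in D) = (x \in dg (A i0)) && (x \notin Aall).
  move=> x; rewrite HD0 inE in_coset_add (shift _ a0 0); last by rewrite subr0.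
  rewrite subr0; case xH : (x \in dg (A i0)); rewrite ?andbT ?andbF //.
  apply/idP/idP; last by apply: contra; apply: AinAll.
  by apply: contra => xA; apply: F1 a0A xA _; rewrite grpB.
have La : forall (i j : 'I_m) a b x, i != j -> a \in A i -> b \in A j ->
    ~~ (dg (A j) \subset dg (A i)) -> x - a \in dg (A i) -> x \notin Aall ->
    x - b \in dg (A j).
  move=> i j a b x ij ai bj nsub xa xE; apply/negPn/negP => xb.
  case/subsetPn: nsub => h hj hni.
  have claim : forall z, z \in A i -> z - b \in dg (A j).
    move=> z zi; apply/negPn/negP => zb.
    have zx : z - x \in dg (A i).
      by have := grpB (dg_mem zi ai) xa; rewrite opprB addrA subrK.
    have xh : x + h \notin Aall by apply: F2 bj xE xb hj.
    have xha : x + h - a \notin dg (A i).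
      apply: contra hni => xha.
      by have := grpB xha xa; rewrite opprB addrA subrK addrC addKr.
    have := F2 _ _ _ _ ai xh xha zx.
    have -> : x + h + (z - x) = z + h.
      by rewrite addrC addrA subrK addrC.
    move=> zhE.
    have zhb : z + h - b \notin dg (A j).
      apply: contra zb => zhb.
      by have := grpB zhb hj; rewrite addrAC addrK.
    have := F2 _ _ _ _ bj zhE zhb (grpN hj); rewrite addrK.
    by rewrite (AinAll _ _ zi).
  have sub : dg (A i) \subset dg (A j).
    rewrite gen_subG; apply/subsetP => u /imset2P[z1 z2 z1i z2i ->].
    by have := grpB (claim _ z1i) (claim _ z2i); rewrite opprB addrA subrK.
  move/negP: xb; apply.
  have := grpD (subsetP sub _ xa) (claim _ ai).
  by rewrite addrA subrK.
have Main : forall (i j : 'I_m) a b x, (j < r)%N -> i != j -> a \in A i ->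
    b \in A j -> x - a \in dg (A i) -> x \notin Aall -> x - b \in dg (A j).
  move=> i j a b x jr ij ai bj xa xE.
  case: (boolP (dg (A j) \subset dg (A i))) => sji; last exact: La ij ai bj sji xa xE.
  case: (boolP (dg (A i) \subset dg (A j))) => sij; last first.
    have [h0 h0j bh0] := Hhole j b jr bj.
    have ya : b + h0 - a \in dg (A i).
      apply: (La j i b a (b + h0)) => //; first by rewrite eq_sym.
      by rewrite [b + h0]addrC addrK.
    have ba : b - a \in dg (A i).
      by have := grpB ya (subsetP sji _ h0j); rewrite addrAC addrK.
    have bi := F1 _ _ _ ai (AinAll _ _ bj) ba.
    by case: (disj_mem (Hdis _ _ ij) bi bj).
  apply/negPn/negP => xb.
  have ax : a - x \in dg (A j).
    by apply: (subsetP sij); rewrite -grpNE opprB.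
  have := F2 _ _ _ _ bj xE xb ax; rewrite addrC subrK.
  by rewrite (AinAll _ _ ai).
have sh0 : forall x, (x - a0 \in dg (A i0)) = (x \in dg (A i0)).
  by move=> x; rewrite (shift _ a0 0) ?subr0.
have XE : forall (i : 'I_m) a, (i < r)%N -> a \in A i ->
    forall x, (x - a \in dg (A i)) && (x \notin Aall) = (x \in D).
  move=> i a ir ai x.
  case: (eqVneq i i0) => [eii0|ii0].
    subst i; rewrite DE (shift _ a a0) ?sh0 //. by have := dg_mem ai a0A; rewrite sh0.
  apply/idP/idP.
    move=> /andP[xa xE]; rewrite DE xE andbT -sh0.
    exact: (Main i i0 a a0 x i0r ii0 ai a0A xa xE).
  rewrite DE => /andP[xH xE]; rewrite xE andbT.
  apply: (Main i0 i a0 a x ir _ a0A ai _ xE); first by rewrite eq_sym.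
  by rewrite sh0.
have aInH : forall (i : 'I_m) a, (i < r)%N -> a \in A i -> a \in dg (A i).
  move=> i a ir ai; have := XE i a ir ai 0; rewrite D0 sub0r grpNE.
  by case/andP.
have KE : forall (i : 'I_m), (i < r)%N ->
    forall x, (x \in dg (A i)) && (x \notin Aall) = (x \in D).
  move=> i ir x; have /set0Pn[a ai] := Hne i.
  rewrite -(XE i a ir ai) (shift _ a 0) ?subr0 //; exact: aInH.
have DnA : forall x, x \in D -> x \notin Aall.
  by move=> x; rewrite -(KE i0 i0r) => /andP[].
have DsubH : forall (i : 'I_m), (i < r)%N -> D \subset dg (A i).
  by move=> i ir; apply/subsetP => x; rewrite -(KE i ir) => /andP[].
have AsubH : forall (i : 'I_m) x, (i < r)%N -> x \in A i -> x \in dg (A i).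
  by move=> i x ir xi; have := grpD (dg_mem xi xi) (aInH _ _ ir xi); rewrite subrr add0r.
have P2 : forall (i : 'I_m) a, (r <= i)%N -> a \in A i ->
    dg (A i) \subset D /\ A i = coset_add a (dg (A i)).
  move=> i a ri ai.
  have Eper : forall x h, x \notin Aall -> h \in dg (A i) -> x + h \notin Aall.
    move=> x h xE hi; case: (boolP (x - a \in dg (A i))) => xa; last first.
      exact: F2 ai xE xa hi.
    have := Hfull i a ri ai _ xa; rewrite addrC subrK => xi.
    by rewrite (AinAll _ _ xi) in xE.
  have sub0 : dg (A i) \subset dg (A i0).
    apply/subsetP => h hi; apply/negPn/negP => hn0.
    have hE : h \notin Aall by have := Eper 0 h (DnA 0 D0) hi; rewrite add0r.
    have ha0 : h - a0 \notin dg (A i0) by rewrite sh0.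
    have := F2 i0 a0 h a0 a0A hE ha0 a0H => ha.
    have := Eper _ _ ha (grpN hi); rewrite [h + a0]addrC addrK.
    by rewrite (AinAll _ _ a0A).
  split.
    apply/subsetP => h hi; rewrite -(KE i0 i0r) (subsetP sub0 _ hi) /=.
    by have := Eper 0 h (DnA 0 D0) hi; rewrite add0r.
  apply/setP => x; rewrite in_coset_add; apply/idP/idP; first by move=> xi; apply: dg_mem.
  by move=> xa; have := Hfull i a ri ai _ xa; rewrite addrC subrK.
pose HG : {group G} := <<\bigcup_(i : 'I_m | (i < r)%N) dg (A i)>>%G.
have HE : H = HG by [].
rewrite HE.
have dgsubHG : forall i : 'I_m, (i < r)%N -> dg (A i) \subset HG.
  move=> i ir; apply/subsetP => x xi; apply: mem_gen.
  by apply/bigcupP; exists i.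
have DsubHG : D \subset HG := subset_trans (DsubH i0 i0r) (dgsubHG i0 i0r).
have EDper : forall x h, x \notin Aall -> x \notin D -> h \in HG ->
    (x + h \notin Aall) && (x + h \notin D).
  pose P := [set h : G | [forall x, ((x \notin Aall) && (x \notin D)) ==>
                                  ((x + h \notin Aall) && (x + h \notin D))]].
  suff sP : (HG : {set G}) \subset P.
    move=> x h xE xD /(subsetP sP); rewrite inE => /forallP/(_ x)/implyP; apply.
    by rewrite xE xD.
  apply: gen_closed.
  - by rewrite inE; apply/forallP => z; rewrite addr0 implybb.
  - move=> u v; rewrite !inE => /forallP Pu /forallP Pv; apply/forallP => z.
    apply/implyP => zB; rewrite addrA.
    by move/implyP: (Pv (z + u)); apply; move/implyP: (Pu z); apply.
  apply/bigcupsP => i ir; apply/subsetP => h hi; rewrite inE.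
  apply/forallP => x; apply/implyP => /andP[xE xD].
  have xni : x \notin dg (A i).
    by apply: contra xD => xi; rewrite -(KE i ir) xi xE.
  have /set0Pn[a ai] := Hne i.
  have xa : x - a \notin dg (A i).
    apply: contra xni => xa.
    by have := grpD xa (aInH _ _ ir ai); rewrite subrK.
  rewrite (F2 _ _ _ _ ai xE xa hi) /=.
  apply: contra xni => /(subsetP (DsubH i ir)) xhi.
  by have := grpB xhi hi; rewrite addrK.
have HnD : forall x, x \in HG -> x \notin D -> x \in Aall.
  move=> x xH xnD; apply/negPn/negP => xE.
  by have := EDper x (-x) xE xnD (grpN xH); rewrite subrr D0 andbF.
have Asub : forall (j : 'I_m) y, (r <= j)%N -> y \in A j -> y \in HG ->
    A j \subset HG.
  move=> j y rj yj yH; have [sD eA] := P2 j y rj yj.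
  apply/subsetP => z; rewrite eA in_coset_add => zy.
  have := grpD yH (subsetP DsubHG _ (subsetP sD _ zy)).
  by rewrite addrC subrK.
split.
  move=> i j ir jr ij; apply/setP => x; rewrite inE; apply/idP/idP.
    move=> /andP[xi xj]; case: (boolP (x \in Aall)) => xA; last first.
      by rewrite -(KE i ir) xi xA.
    have /set0Pn[a ai] := Hne i; have /set0Pn[b bj] := Hne j.
    have xAi := F1 _ _ _ ai xA (grpB xi (aInH _ _ ir ai)).
    have xAj := F1 _ _ _ bj xA (grpB xj (aInH _ _ jr bj)).
    by case: (disj_mem (Hdis _ _ ij) xAi xAj).
  by move=> xD; rewrite (subsetP (DsubH i ir) _ xD) (subsetP (DsubH j jr) _ xD).
split.
  move=> i ir; apply/setP => x; rewrite inE; apply/idP/idP.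
    move=> xi; rewrite AsubH // andbT; apply/negP => xD.
    by have := DnA x xD; rewrite (AinAll _ _ xi).
  move=> /andP[xD xi].
  have xA : x \in Aall.
    apply/negPn/negP => xE; move/negP: xD; apply.
    by rewrite -(KE i ir) xi xE.
  have /set0Pn[a ai] := Hne i.
  exact: F1 _ _ _ ai xA (grpB xi (aInH _ _ ir ai)).
split.
  move=> i ri; have /set0Pn[a ai] := Hne i.
  have [sD eA] := P2 i a ri ai.
  by exists (dg (A i)), a.
split.
  by apply/subsetP => x; rewrite inE => /andP[xnD xH]; apply: HnD.
have [k [s [rk sfix ps]]] :=
  @perm_sortex m r (fun i : 'I_m => (i < r)%N || (A i \subset HG)) Hrm
    (fun i ir => introT orP (or_introl ir)).
exists k, s; split => //.
  apply/setP => x; rewrite inE; apply/idP/idP.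
    move=> /andP[xnD xH]; have := HnD x xH xnD => /bigcupP[j _ xj].
    apply/bigcupP; exists ((s^-1)%g j); last by rewrite permKV.
    rewrite -ps permKV /=; case: (ltnP j r) => [//|rj].
    by rewrite (Asub j x rj xj xH) orbT.
  case/bigcupP => i ik xi; have := ps i; rewrite ik.
  have xnD : x \notin D by apply/negP => xD; have := DnA x xD; rewrite (AinAll _ _ xi).
  rewrite xnD /=; case/orP => [sir|sub]; last exact: (subsetP sub).
  exact: (subsetP (dgsubHG _ sir)) (AsubH _ _ sir xi).
move=> km; split.
  move=> x h /bigcupP[i ki xi] hH.
  have := ps i; rewrite [(i < k)%N]ltnNge ki /= => /negbT; rewrite negb_or -leqNgt.
  case/andP => rsi nsub.
  have xnH : x \notin HG by apply: contra nsub => xH; exact: Asub xi xH.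
  have xhnH : x + h \notin HG.
    by apply: contra xnH => xhH; have := grpB xhH hH; rewrite addrK.
  have xhA : x + h \in Aall.
    apply/negPn/negP => xhE.
    have xhnD : x + h \notin D by apply: contra xhnH; apply: (subsetP DsubHG).
    have := EDper _ _ xhE xhnD (grpN hH); rewrite addrK (AinAll _ _ xi).
    by [].
  case/bigcupP: xhA => j _ xhj.
  apply/bigcupP; exists ((s^-1)%g j); last by rewrite permKV.
  rewrite leqNgt -ps permKV negb_or; apply/andP; split.
    apply/negP => jr; move/negP: xhnH; apply.
    exact: (subsetP (dgsubHG _ jr)) (AsubH _ _ jr xhj).
  by apply/negP => sub; move/negP: xhnH; apply; apply: (subsetP sub).
move=> i ki.
have := ps i; rewrite [(i < k)%N]ltnNge ki /= => /negbT; rewrite negb_or -leqNgt.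
case/andP => rsi _.
have /set0Pn[a ai] := Hne (s i).
have [sD eA] := P2 _ a rsi ai.
exists (dg (A (s i))), a, a; split => //.
rewrite {1}eA; apply/subsetP => y; rewrite !in_coset_add => ya.
exact: (subsetP DsubHG) (subsetP sD _ ya).
Qed.
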